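(* Let $G$ be a group of isometries of the rooted tree $\mathcal T=X^*$. Then the set of pre-layered subgroups of $G$ is closed under intersections and under taking the subgroup generated by two of them (so forms a lattice), and for every word $w$ in a free group, if $H\le G$ is pre-layered then the verbal subgroup $w(H)$ is pre-layered.
   Context: $X$ is a finite alphabet with $|X|\ge2$ and $\mathcal T=X^*$ the associated rooted regular tree. For $x\in X$ and an isometry $g$, $x*g$ denotes the isometry acting as $g$ on the subtree below $x$ (i.e. $(xw)^{x*g}=xw^g$) and fixing all other vertices. A subgroup $H$ is pre-layered if $x*H\le H$ for all $x\in X$. For a word $w(X_1,\dots,X_n)$, $w(H)$ is the subgroup generated by all values $w(h_1,\dots,h_n)$, $h_i\in H$. *)

(* Defs.v *)
From mathcomp Require Import all_boot.
Set Implicit Arguments. Unset Strict Implicit. Unset Printing Implicit Defensive.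

Section Tree.
Variable X : finType.

Definition vert := seq X.
Definition map_t := vert -> vert.
Definition isoset := map_t -> Prop.

Definition is_isom (g : map_t) : Prop :=
  bijective g /\ g [::] = [::] /\
  (forall (w : vert) (x : X), exists y : X, g (rcons w x) = rcons (g w) y).

(* right action convention: w^(g h) = (w^g)^h *)
Definition gmul (g h : map_t) : map_t := fun w => h (g w).
Definition gone : map_t := fun w => w.

Definition is_group (H : isoset) : Prop :=
  [/\ H gone,
      (forall g, H g -> is_isom g),
      (forall g h, H g -> H h -> H (gmul g h)) &
      (forall g, H g -> exists h, [/\ H h, gmul g h = gone & gmul h g = gone])].

(* x * g : acts as g below x, fixes everything else *)
Definition lcomp (x : X) (g : map_t) : map_t :=
  fun v => match v with
           | y :: w => if y == x then x :: g w else v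
           | [::] => [::]
           end.

Definition prelayered (G H : isoset) : Prop :=
  [/\ is_group H, (forall g, H g -> G g) &
      (forall (x : X) g, H g -> H (lcomp x g))].

Definition gen (S : isoset) : isoset :=
  fun g => forall K : isoset, is_group K -> (forall h, S h -> K h) -> K g.

Inductive word : Type :=
| WVar of nat
| WOne
| WMul of word & word
| WInv of word.

(* wval w f g : g is the value of w at the assignment X_i := f i *)
Fixpoint wval (w : word) (f : nat -> map_t) (g : map_t) : Prop :=
  match w with
  | WVar i => g = f i
  | WOne => g = gone
  | WMul u v => exists a b, [/\ wval u f a, wval v f b & g = gmul a b]
  | WInv u => exists a, [/\ wval u f a, gmul a g = gone & gmul g a = gone]
  end.

Definition verbal (w : word) (H : isoset) : isoset :=
  gen (fun g => exists f : nat -> map_t, (forall i, H (f i)) /\ wval w f g).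

End Tree.

(* Main.v *)
Require Import Defs.
From mathcomp Require Import all_boot.
From Stdlib Require Import FunctionalExtensionality.

Section Aux.
Variable X : finType.

Lemma inv_uniq (g h h' : map_t X) :
  gmul g h' = (@gone X) -> gmul h g = (@gone X) -> h = h'.
Proof.
move=> e1 e2; apply: functional_extensionality => w.
have := congr1 (fun f => f (h w)) e1; rewrite /gmul /gone => <-.
by have := congr1 (fun f => f w) e2; rewrite /gmul /gone => ->.
Qed.

Arguments inv_uniq {g h h'}.

Lemma lcomp_mul (x : X) a b : lcomp x (gmul a b) = gmul (lcomp x a) (lcomp x b).
Proof.
apply: functional_extensionality => -[|y w] //=; rewrite /gmul /=.
by case: eqP => [e|ne] /=; rewrite ?eqxx //; case: eqP.
Qed.

Lemma lcomp_one (x : X) : lcomp x (@gone X) = (@gone X).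
Proof.
apply: functional_extensionality => -[|y w] //=; rewrite /gone.
by case: (y =P x) => [->|//].
Qed.

Lemma gen_sub (S K : isoset X) g : gen S g -> is_group K -> (forall h, S h -> K h) -> K g.
Proof. by move=> H1 H2 H3; apply: H1. Qed.

Lemma gen_prelayered (G S : isoset X) : is_group G -> (forall g, S g -> G g) ->
  (forall x g, S g -> S (lcomp x g)) -> prelayered G (gen S).
Proof.
move=> hG SG Sl.
have genG : forall g, gen S g -> G g by move=> g Hg; apply: Hg.
case: hG => G1 Gi Gm GV.
split.
- split.
  + by move=> K [K1 _ _ _] _.
  + by move=> g /genG /Gi.
  + by move=> g h Hg Hh K hK KS; case: (hK) => _ _ Km _; apply: Km; [apply: Hg|apply: Hh].
  + move=> g Hg; have [h [Gh e1 e2]] := GV g (genG g Hg).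
    exists h; split=> // K hK KS.
    case: (hK) => _ _ _ KV; have [h' [Kh' e1' e2']] := KV g (Hg K hK KS).
    by rewrite (inv_uniq e1' e2).
- exact: genG.
- move=> x g Hg K hK KS.
  pose K' := fun g => G g /\ K (lcomp x g).
  suff: K' g by case.
  apply: Hg; last by move=> h Sh; split; [apply: SG|apply: KS; apply: Sl].
  case: (hK) => K1 Ki Km KV.
  split.
  + by split=> //; rewrite lcomp_one.
  + by move=> h [/Gi].
  + by move=> a b [Ga Ka] [Gb Kb]; split; [apply: Gm|rewrite lcomp_mul; apply: Km].
  + move=> a [Ga Ka]; have [h [Gh e1 e2]] := GV a Ga.
    exists h; split=> //; split=> //.
    have [k [Kk e1' e2']] := KV _ Ka.
    have e3 : gmul (lcomp x h) (lcomp x a) = (@gone X) by rewrite -lcomp_mul e2 lcomp_one.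
    by rewrite (inv_uniq e1' e3).
Qed.

Lemma wval_H (H : isoset X) w f g : is_group H -> (forall i, H (f i)) -> wval w f g -> H g.
Proof.
move=> [H1 Hi Hm HV] Hf; elim: w g => [i|| u IHu v IHv | u IHu] g /=.
- by move=> ->.
- by move=> ->.
- by move=> [a [b [ua vb ->]]]; apply: Hm; [apply: IHu|apply: IHv].
- move=> [a [ua e1 e2]]; have [h [Hh e1' e2']] := HV a (IHu a ua).
  by rewrite -(inv_uniq e1 e2').
Qed.

Lemma wval_lcomp (x : X) w f g : wval w f g -> wval w (fun i => lcomp x (f i)) (lcomp x g).
Proof.
elim: w g => [i|| u IHu v IHv | u IHu] g /=.
- by move=> ->.
- by move=> ->; rewrite lcomp_one.
- move=> [a [b [ua vb ->]]]; exists (lcomp x a), (lcomp x b); split; auto.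
  by rewrite lcomp_mul.
- move=> [a [ua e1 e2]]; exists (lcomp x a); split; auto.
  + by rewrite -lcomp_mul e1 lcomp_one.
  + by rewrite -lcomp_mul e2 lcomp_one.
Qed.

End Aux.
Arguments inv_uniq {X g h h'}.

Theorem lemma3p3 (X : finType) (hX : 1 < #|X|) (G : isoset X)
  (hG : is_group G) :
  [/\ (forall (I : Type) (Hs : I -> isoset X), inhabited I ->
         (forall i, prelayered G (Hs i)) ->
         prelayered G (fun g => forall i, Hs i g)),
      (forall H K : isoset X, prelayered G H -> prelayered G K ->
         prelayered G (gen (fun g => H g \/ K g))) &
      (forall (w : word) (H : isoset X), prelayered G H ->
         prelayered G (verbal w H))].
Proof.
split.
- move=> I Hs [i0] HP.
  split.
  + split.
    * by move=> i; case: (HP i) => -[].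
    * by move=> g Hg; case: (HP i0) => -[_ Hi _ _] _ _; apply: Hi.
    * by move=> g h Hg Hh i; case: (HP i) => -[_ _ Hm _] _ _; apply: Hm.
    * move=> g Hg; case: (HP i0) => -[_ _ _ HV] _ _.
      have [h [Hh e1 e2]] := HV g (Hg i0).
      exists h; split=> // i.
      case: (HP i) => -[_ _ _ HV'] _ _.
      have [h' [Hh' e1' e2']] := HV' g (Hg i).
      by rewrite (inv_uniq e1' e2).
  + by move=> g Hg; case: (HP i0) => _ HG _; apply: HG.
  + by move=> x g Hg i; case: (HP i) => _ _ Hl; apply: Hl.
- move=> H K [_ HG Hl] [_ KG Kl]; apply: gen_prelayered => //.
  + by move=> g [/HG|/KG].
  + by move=> x g [/(Hl x)|/(Kl x)]; auto.
- move=> w H [hH HG Hl]; apply: gen_prelayered => //.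
  + by move=> g [f [Hf wf]]; apply: HG; exact: (@wval_H _ H w f g hH Hf wf).
  + move=> x g [f [Hf wf]]; exists (fun i => lcomp x (f i)); split.
    * by move=> i; apply: Hl.
    * exact: wval_lcomp.
Qed.
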